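(* If $G$ is a bipartite, connected, nontraceable detour graph, then $\Delta(G)\le \left\lceil \frac{\tau(G)-2}{2}\right\rceil$.
   Context: All graphs are finite and simple; the order of a path is its number of vertices. For a vertex $v$, $\tau(v)$ is the order of a longest path in $G$ having $v$ as an endvertex, and $\tau(G)$ is the order of a longest path in $G$. A detour graph is one in which all vertices have the same $\tau(v)$. Nontraceable means having no hamiltonian path. $\Delta(G)$ is the maximum degree. *)

(* Defs.v *)
(* Simple graphs: symmetric irreflexive e : rel T on T : finType. *)
From mathcomp Require Import all_boot.
Set Implicit Arguments. Unset Strict Implicit. Unset Printing Implicit Defensive.

Section Graphs.
Variable T : finType.
Variable e : rel T.

Definition gpath (p : seq T) : bool :=
  if p is x :: s then path e x s && uniq p else false.

Definition endv (p : seq T) (v : T) : bool :=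
  if p is x :: s then (x == v) || (last x s == v) else false.

Definition tau_v (v : T) : nat :=
  \max_(n < #|T|.+1 | [exists p : n.-tuple T, gpath p && endv p v]) n.

Definition tau : nat :=
  \max_(n < #|T|.+1 | [exists p : n.-tuple T, gpath p]) n.

Definition detour : Prop := forall u v : T, tau_v u = tau_v v.

Definition traceable : Prop := exists p : seq T, gpath p && (size p == #|T|).

Definition bipartite : Prop :=
  exists f : T -> bool, forall x y, e x y -> f x != f y.

Definition gconnected : Prop := forall x y : T, connect e x y.

Definition maxdeg : nat := \max_(v : T) #|[set u | e v u]|.

(* ceil((t-2)/2) for t >= 2 (nat) *)
Definition ceil_half_minus2 (t : nat) : nat := (t - 1) %/ 2.
End Graphs.

(* Main.v *)
Require Import Defs.
From mathcomp Require Import all_boot zify.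
Set Implicit Arguments. Unset Strict Implicit.

Lemma max_witness N (P : pred 'I_N) (i0 : 'I_N) :
  P i0 -> exists i : 'I_N, P i && (nat_of_ord i == \max_(i | P i) nat_of_ord i).
Proof.
move=> Pi0; rewrite (bigmax_eq_arg i0) //.
case: arg_maxnP => //= i Pi _; exists i; by rewrite Pi eqxx.
Qed.

Lemma gpath_size_le (T : finType) (e : rel T) p : gpath e p -> size p <= #|T|.
Proof.
case: p => // x s /andP[_ /card_uniqP <-]; exact: max_card.
Qed.

Lemma gpath_le_tau (T : finType) (e : rel T) p : gpath e p -> size p <= tau e.
Proof.
move=> gp; have H : size p < #|T|.+1 by rewrite ltnS (gpath_size_le gp).
apply: (@leq_bigmax_cond _ _ _ (Ordinal H)) => /=.
by apply/existsP; exists (in_tuple p).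
Qed.

Lemma gpath_le_tau_v (T : finType) (e : rel T) p v :
  gpath e p -> endv p v -> size p <= tau_v e v.
Proof.
move=> gp ev; have H : size p < #|T|.+1 by rewrite ltnS (gpath_size_le gp).
apply: (@leq_bigmax_cond _ _ _ (Ordinal H)) => /=.
by apply/existsP; exists (in_tuple p); rewrite gp ev.
Qed.

Lemma tau_witness (T : finType) (e : rel T) :
  0 < #|T| -> exists p, gpath e p && (size p == tau e).
Proof.
case/card_gt0P => x _.
have H : 1 < #|T|.+1 by rewrite ltnS; apply/card_gt0P; exists x.
have P1 : [exists p : (Ordinal H).-tuple T, gpath e p].
  by apply/existsP; exists [tuple x].
case: (@max_witness _ (fun n : 'I_#|T|.+1 => [exists p : n.-tuple T, gpath e p]) (Ordinal H) P1) => i /andP[/existsP[p gp] /eqP ei].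
by exists p; rewrite gp size_tuple /tau ei eqxx.
Qed.

Lemma tau_v_witness (T : finType) (e : rel T) v :
  exists p, [&& gpath e p, endv p v & size p == tau_v e v].
Proof.
have H : 1 < #|T|.+1 by rewrite ltnS; apply/card_gt0P; exists v.
have P1 : [exists p : (Ordinal H).-tuple T, gpath e p && endv p v].
  by apply/existsP; exists [tuple v]; rewrite /= eqxx.
case: (@max_witness _ (fun n : 'I_#|T|.+1 => [exists p : n.-tuple T, gpath e p && endv p v]) (Ordinal H) P1) => i /andP[/existsP[p /andP[gp ev]] /eqP ei].
by exists p; rewrite gp ev size_tuple /tau_v ei eqxx.
Qed.

Lemma gpath_rev (T : finType) (e : rel T) p :
  symmetric e -> gpath e p -> gpath e (rev p).
Proof.
move=> esym; case: p => // x s /andP[pa u].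
have E : rev (x :: s) = last x s :: rev (belast x s) by rewrite lastI rev_rcons.
have U : uniq (rev (x :: s)) by rewrite rev_uniq.
rewrite E in U *; rewrite /gpath U andbT.
have -> : path e (last x s) (rev (belast x s)) = path (fun z => e^~ z) x s by rewrite rev_path.
by rewrite (@eq_path _ _ e) // => a b; rewrite esym.
Qed.

Lemma path_parity (T : finType) (e : rel T) (f : T -> bool) x0 :
  (forall a b, e a b -> f a != f b) ->
  forall s x, path e x s -> forall j, j < size (x :: s) ->
  f (nth x0 (x :: s) j) = f x (+) odd j.
Proof.
move=> fP; elim=> [|y s IH] x /=.
  by move=> _ [|j] //=; rewrite addbF.
case/andP=> exy py [|j] /=; first by rewrite addbF.
rewrite ltnS => jlt; rewrite (IH y py j jlt).
have := fP _ _ exy; case: (f x); case: (f y) => //= _; by case: (odd j).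
Qed.

Lemma exit_edge (T : finType) (e : rel T) (A : pred T) q a :
  a \in A -> path e a q -> last a q \notin A ->
  exists x y, [/\ x \in A, y \notin A & e x y].
Proof.
elim: q a => [|b q IH] a /=; first by move=> ->.
move=> aA /andP[eab pb] lq.
case bA: (b \in A); first exact: (IH b bA pb lq).
by exists a, b; rewrite bA.
Qed.

Lemma count_odd_iota n : count odd (iota 0 n) = n./2.
Proof.
elim: n => // n IH.
rewrite -addn1 iotaD count_cat IH /= add0n addn0 addn1.
by rewrite -[n.+1./2]/(uphalf n) uphalf_half addnC.
Qed.

Lemma cycle_extend (T : finType) (e : rel T) v s :
  symmetric e -> gconnected e -> gpath e (v :: s) -> e v (last v s) ->
  size (v :: s) < #|T| -> exists q, gpath e q && (size (v :: s) < size q).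
Proof.
move=> esym conn /andP[pa u] elast slt.
set c := v :: s.
case: (pickP (predC (mem c))) => [w /= wn | H]; last first.
  have : #|T| <= #|c|.
    apply: subset_leq_card; apply/subsetP => z _.
    by have := H z; rewrite /=; case: (z \in c).
  by move/card_uniqP: u => ->; rewrite leqNgt slt.
have /connectP [q pq wq] := conn v w.
have vc : v \in mem c by rewrite inE eqxx.
have wn' : last v q \notin mem c by rewrite -wq.
have [x [y [xc yn exy]]] := exit_edge vc pq wn'.
have cy : cycle e c by rewrite /c /= rcons_path pa esym.
case: (rot_to xc) => i r Hr.
have cr : cycle e (x :: r) by rewrite -Hr rot_cycle.
have ur : uniq (x :: r) by rewrite -Hr rot_uniq.
exists (y :: x :: r).
rewrite /gpath /= esym exy.
move: cr; rewrite /= rcons_path => /andP[-> _].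
have -> : (y \notin x :: r) by rewrite -Hr mem_rot.
move: ur => /= ->.
have : size (x :: r) = size c by rewrite -Hr size_rot.
by move=> /= ->.
Qed.

Theorem theorem2p27 (T : finType) (e : rel T) :
  symmetric e -> irreflexive e -> 0 < #|T| ->
  bipartite e -> gconnected e -> ~ traceable e -> detour e ->
  maxdeg e <= ceil_half_minus2 (tau e).
Proof.
move=> esym eirr Tn0 [f fP] conn ntr det.
have [p0 /andP[gp0 /eqP sp0]] := tau_witness e Tn0.
case: p0 gp0 sp0 => // x0 s0 gp0 sp0.
have tx0 : tau_v e x0 = tau e.
  apply/eqP; rewrite eqn_leq; apply/andP; split.
    have [p /and3P[gp _ /eqP <-]] := tau_v_witness e x0.
    exact: gpath_le_tau.
  by rewrite -sp0; apply: gpath_le_tau_v gp0 _; rewrite /= eqxx.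
have ltT : tau e < #|T|.
  rewrite ltn_neqAle; apply/andP; split.
    apply/negP => /eqP H; apply: ntr; exists (x0 :: s0).
    by rewrite gp0 sp0 H eqxx.
  by rewrite -sp0; exact: gpath_size_le gp0.
rewrite /maxdeg; apply/bigmax_leqP => v _.
have [q /and3P[gq evq /eqP sq]] := tau_v_witness e v.
rewrite (det v x0) tx0 in sq.
have [s [gs ss]] : exists s, gpath e (v :: s) /\ size (v :: s) = tau e.
  case: q gq evq sq => // y r gq /orP[/eqP <- | /eqP lv] sq; first by exists r.
  exists (rev (belast y r)).
  have := gpath_rev esym gq; rewrite lastI rev_rcons lv => g; split => //.
  by rewrite /= size_rev size_belast; rewrite /= in sq.
have key : forall u, e v u ->
    u \in v :: s /\ index u (v :: s) \in filter odd (iota 0 (tau e).-1).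
  move=> u evu.
  have us : u \in v :: s.
    apply/negPn/negP => un.
    have g' : gpath e (u :: v :: s).
      move: gs => /andP[pa uu].
      by rewrite /gpath /= esym evu pa; move: uu un => /= -> ->.
    move: (gpath_le_tau g'); rewrite -ss /=; lia.
  split => //.
  have ilt : index u (v :: s) < size (v :: s) by rewrite index_mem.
  have hu : nth v (v :: s) (index u (v :: s)) = u by rewrite nth_index.
  have odd_i : odd (index u (v :: s)).
    have := path_parity v fP (proj1 (andP gs)) ilt; rewrite hu => H.
    move: (fP v u evu); rewrite H; case: (f v); case: (odd _) => //.
  have ne : index u (v :: s) != (size (v :: s)).-1.
    apply/eqP => E.
    have ul : u = last v s by rewrite -hu E nth_last.
    have el : e v (last v s) by rewrite -ul.
    have sl : size (v :: s) < #|T| by rewrite ss.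
    have [q' /andP[gq' lq']] := cycle_extend esym conn gs el sl.
    move: (gpath_le_tau gq'); rewrite -ss; lia.
  rewrite mem_filter odd_i mem_iota /= add0n -ss.
  move: ilt ne; rewrite -[size (v :: s)]/((size s).+1) /=; lia.
have H : size (map (index^~ (v :: s)) (enum [set u | e v u]))
         <= size (filter odd (iota 0 (tau e).-1)).
  apply: uniq_leq_size.
    rewrite map_inj_in_uniq ?enum_uniq // => a b.
    rewrite !mem_enum !inE => ea eb E.
    by rewrite -(nth_index v (key a ea).1) -(nth_index v (key b eb).1) E.
  by move=> n /mapP[a]; rewrite mem_enum inE => ea ->; exact: (key a ea).2.
move: H; rewrite size_map -cardE size_filter count_odd_iota.
by rewrite /ceil_half_minus2 divn2 subn1.
Qed.
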